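(* Let $X\in\{F,A\}$. For every state $\rho^{ab}$ on $\mathcal H_a\otimes\mathcal H_b$, $C^a_{X,cc}(\rho^{ab})\ge D^a_X(\rho^{ab})$. Equality holds if $\rho^a=\mathrm{Tr}_b\rho^{ab}=I^a/n_a$ (with $n_a=\dim\mathcal H_a$), or if $\rho^{ab}$ is a pure state.
   Context: $F(\rho,\sigma)=\mathrm{Tr}\sqrt{\sqrt\sigma\rho\sqrt\sigma}$, $A(\rho,\sigma)=\mathrm{Tr}(\sqrt\rho\sqrt\sigma)$, $d_X=1-X^2$. For an orthonormal basis $\mathcal B=\{|\alpha_i\rangle\}$ of $\mathcal H_a$, let $C^a_X(\rho^{ab};\mathcal B)=\min d_X(\rho^{ab},\sigma)$ over states $\sigma=\sum_ip_i|\alpha_i\rangle\langle\alpha_i|\otimes\sigma_i$. The correlated coherence is $C^a_{X,cc}(\rho^{ab})=\min_{\mathcal B}C^a_X(\rho^{ab};\mathcal B)$, the minimum over orthonormal bases $\mathcal B$ of $\mathcal H_a$ consisting of eigenvectors of $\rho^a$ (equivalently, bases in which $\rho^a$ has zero coherence). The discord-type quantity is $D^a_X(\rho^{ab})=\min d_X(\rho^{ab},\sigma)$ over all classical-quantum states $\sigma=\sum_ip_i|\alpha_i\rangle\langle\alpha_i|\otimes\sigma_i$ with $\{|\alpha_i\rangle\}$ any orthonormal basis of $\mathcal H_a$ (i.e. the minimum of $C^a_X(\rho^{ab};\mathcal B)$ over all orthonormal bases $\mathcal B$). *)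

(* Defs.v *)
From HB Require Import structures.
From mathcomp Require Import all_boot all_order all_algebra.
Set Implicit Arguments.
Unset Strict Implicit.
Unset Printing Implicit Defensive.
Import Order.TTheory GRing.Theory Num.Theory Num.Def.
Local Open Scope ring_scope.

Section QInfo.
Variable C : numClosedFieldType.

Definition adjmx m n (A : 'M[C]_(m, n)) : 'M[C]_(n, m) := map_mx conjC A^T.

Definition psdmx n (A : 'M[C]_n) : Prop :=
  forall v : 'cV[C]_n, 0 <= (adjmx v *m A *m v) 0 0.

Definition is_state n (A : 'M[C]_n) : Prop := psdmx A /\ \tr A = 1.

Definition is_pure n (A : 'M[C]_n) : Prop :=
  is_state A /\ exists v : 'cV[C]_n, A = v *m adjmx v.

Definition sqrtmx n (A : 'M[C]_n) : 'M[C]_n :=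
  invmx (spectralmx A) *m diag_mx (map_mx sqrtC (spectral_diag A)) *m spectralmx A.

Definition fidelity n (rho sigma : 'M[C]_n) : C :=
  \tr (sqrtmx (sqrtmx sigma *m rho *m sqrtmx sigma)).

Definition affinity n (rho sigma : 'M[C]_n) : C :=
  \tr (sqrtmx rho *m sqrtmx sigma).

Inductive fid_kind := KF | KA.

Definition Xfun (X : fid_kind) n : 'M[C]_n -> 'M[C]_n -> C :=
  match X with KF => @fidelity n | KA => @affinity n end.

Definition dX (X : fid_kind) n (rho sigma : 'M[C]_n) : C := 1 - (Xfun X rho sigma) ^+ 2.

(* bipartite system H_a (x) H_b, index (i,j) |-> mxvec_index i j *)
Definition bidx na nb (k : 'I_(na * nb)) : 'I_na * 'I_nb :=
  enum_val (cast_ord (esym (mxvec_cast na nb)) k).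

Definition kronmx na nb (A : 'M[C]_na) (B : 'M[C]_nb) : 'M[C]_(na * nb) :=
  \matrix_(k, l) (A (bidx k).1 (bidx l).1 * B (bidx k).2 (bidx l).2).

Definition ptrace_b na nb (rho : 'M[C]_(na * nb)) : 'M[C]_na :=
  \matrix_(i, j) \sum_(k < nb) rho (mxvec_index i k) (mxvec_index j k).

(* orthonormal basis of H_a: columns of a unitary matrix U *)
Definition onbasis na (U : 'M[C]_na) : Prop := adjmx U *m U = 1%:M.

Definition is_cq_in na nb (U : 'M[C]_na) (sigma : 'M[C]_(na * nb)) : Prop :=
  exists (p : 'I_na -> C) (S : 'I_na -> 'M[C]_nb),
    (forall i, 0 <= p i) /\ \sum_i p i = 1 /\ (forall i, is_state (S i)) /\
    sigma = \sum_i p i *: kronmx (col i U *m adjmx (col i U)) (S i).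

Definition eigenbasis na (U M : 'M[C]_na) : Prop :=
  forall i, exists lam : C, M *m col i U = lam *: col i U.

(* set of values d_X(rho, sigma), sigma cq in an eigenbasis of rho^a
   (minimum = correlated coherence C^a_{X,cc}) *)
Definition cc_values (X : fid_kind) na nb (rho : 'M[C]_(na * nb)) : C -> Prop :=
  fun v => exists U sigma, onbasis U /\ eigenbasis U (ptrace_b rho) /\
                           is_cq_in U sigma /\ v = dX X rho sigma.

(* set of values d_X(rho, sigma), sigma cq in any orthonormal basis
   (minimum = discord-type quantity D^a_X) *)
Definition disc_values (X : fid_kind) na nb (rho : 'M[C]_(na * nb)) : C -> Prop :=
  fun v => exists U sigma, onbasis U /\ is_cq_in U sigma /\ v = dX X rho sigma.

Definition is_min (S : C -> Prop) (v : C) : Prop :=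
  S v /\ forall w, S w -> v <= w.

End QInfo.

(* Main.v *)
Require Import Defs.
From HB Require Import structures.
From mathcomp Require Import all_boot all_order all_algebra.
From mathcomp Require Import ring.
Set Implicit Arguments.
Unset Strict Implicit.
Unset Printing Implicit Defensive.
Import Order.TTheory GRing.Theory Num.Theory Num.Def.
Local Open Scope ring_scope.

Section Aux.
Variable C : numClosedFieldType.
Local Notation adj := (@adjmx C _ _).

Lemma adjmxM m n p (A : 'M[C]_(m, n)) (B : 'M[C]_(n, p)) :
  adjmx (A *m B) = adjmx B *m adjmx A.
Proof. by rewrite /adjmx trmx_mul map_mxM. Qed.

Lemma adjmxK m n (A : 'M[C]_(m, n)) : adjmx (adjmx A) = A.
Proof. exact: trmxCK. Qed.

Lemma adjmxD m n (A B : 'M[C]_(m, n)) : adjmx (A + B) = adjmx A + adjmx B.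
Proof. by rewrite /adjmx linearD /= map_mxD. Qed.

Lemma adjmxZ m n a (A : 'M[C]_(m, n)) : adjmx (a *: A) = a^* *: adjmx A.
Proof. by apply/matrixP=> i j; rewrite !mxE rmorphM. Qed.

Lemma adjmxE m n (A : 'M[C]_(m, n)) i j : adjmx A i j = (A j i)^*.
Proof. by rewrite !mxE. Qed.

Lemma adjmx_sum m n I (r : seq I) (P : pred I) (F : I -> 'M[C]_(m, n)) :
  adjmx (\sum_(i <- r | P i) F i) = \sum_(i <- r | P i) adjmx (F i).
Proof.
by apply/matrixP=> i j; rewrite !mxE !summxE rmorph_sum; apply: eq_bigr=> k _; rewrite !mxE.
Qed.

Lemma adjmx_diag n (d : 'rV[C]_n) : adjmx (diag_mx d) = diag_mx (map_mx conjC d).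
Proof. by rewrite /adjmx tr_diag_mx map_diag_mx. Qed.

Lemma adjmx1 n : adjmx (1%:M : 'M[C]_n) = 1%:M.
Proof. by rewrite /adjmx trmx1 map_mx1. Qed.

Lemma unitary_adjK n (V : 'M[C]_n) : V \is unitarymx -> adjmx V *m V = 1%:M.
Proof.
move=> Vu; have E : adjmx V = invmx V by rewrite (invmx_unitary Vu).
by rewrite E mulVmx // unitarymx_unit.
Qed.

Lemma unitary_Kadj n (V : 'M[C]_n) : V \is unitarymx -> V *m adjmx V = 1%:M.
Proof. by move/unitarymxP. Qed.

End Aux.

Section Spec.
Variable C : numClosedFieldType.

Definition qf n (u : 'cV[C]_n) (A : 'M[C]_n) : C := (adjmx u *m A *m u) 0 0.

Lemma qf_spec n (V : 'M[C]_n) (h : 'rV[C]_n) (u : 'cV[C]_n) :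
  qf u (adjmx V *m diag_mx h *m V) = \sum_j h 0 j * `|(V *m u) j 0| ^+ 2.
Proof.
have -> : qf u (adjmx V *m diag_mx h *m V) =
   (adjmx (V *m u) *m diag_mx h *m (V *m u)) 0 0 by rewrite /qf adjmxM !mulmxA.
rewrite mul_mx_diag mxE; apply: eq_bigr => j _; rewrite mxE adjmxE normCK.
ring.
Qed.

Lemma adj_delta n (i : 'I_n) : adjmx (delta_mx i 0 : 'cV[C]_n) = delta_mx 0 i.
Proof. by apply/matrixP=> a b; rewrite !mxE conjC_nat andbC. Qed.

Lemma bil_delta n (B : 'M[C]_n) i j :
  (adjmx (delta_mx i 0 : 'cV[C]_n) *m B *m (delta_mx j 0 : 'cV[C]_n)) 0 0 = B i j.
Proof. by rewrite adj_delta -rowE -colE !mxE. Qed.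

Lemma bilDl n (B : 'M[C]_n) (u1 u2 w : 'cV[C]_n) c :
  (adjmx (u1 + c *: u2) *m B *m w) 0 0 =
  (adjmx u1 *m B *m w) 0 0 + c^* * (adjmx u2 *m B *m w) 0 0.
Proof. by rewrite adjmxD adjmxZ !mulmxDl -!scalemxAl !mxE. Qed.

Lemma bilDr n (B : 'M[C]_n) (u w1 w2 : 'cV[C]_n) c :
  (adjmx u *m B *m (w1 + c *: w2)) 0 0 =
  (adjmx u *m B *m w1) 0 0 + c * (adjmx u *m B *m w2) 0 0.
Proof. by rewrite !mulmxDr -!scalemxAr !mxE. Qed.

Lemma polar n (B : 'M[C]_n) : (forall v, qf v B = 0) -> B = 0.
Proof.
move=> H; apply/matrixP=> i j; rewrite mxE.
have qd k : B k k = 0 by rewrite -bil_delta; exact: H.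
have qc c : B i j * c + B j i * c^* = 0.
  have := H (delta_mx i 0 + c *: delta_mx j 0 : 'cV[C]_n).
  rewrite /qf bilDl !bilDr !bil_delta !qd.
  by move=> <-; ring.
have h1 := qc 1; have h2 := qc 'i.
rewrite conjC1 !mulr1 in h1; rewrite conjCi in h2.
have : 'i * (B i j - B j i) = 0.
  by rewrite -h2; ring.
move/eqP; rewrite mulf_eq0 (negbTE (@neq0Ci C)) /= subr_eq0 => /eqP E.
rewrite E in h1 *; move/eqP: h1; rewrite -mulr2n mulrn_eq0 /=.
by move/eqP.
Qed.

Lemma psd_herm n (A : 'M[C]_n) : psdmx A -> adjmx A = A.
Proof.
move=> Ap; apply/eqP; rewrite -subr_eq0; apply/eqP/polar => v.
have E : qf v (adjmx A) = (qf v A)^*.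
  by rewrite /qf -adjmxE !adjmxM adjmxK mulmxA.
rewrite /qf mulmxBr mulmxBl mxE [X in _ + X]mxE; apply/eqP; rewrite subr_eq0.
by rewrite -/(qf v A) -/(qf v (adjmx A)) E geC0_conj //; exact: Ap.
Qed.


End Spec.

Section Spec2.
Variable C : numClosedFieldType.

Lemma delta_sum n (h : 'rV[C]_n) j :
  \sum_k h 0 k * `|(delta_mx j 0 : 'cV[C]_n) k 0| ^+ 2 = h 0 j.
Proof.
rewrite (bigD1 j) //= big1 ?addr0 => [|k /negbTE nk]; rewrite !mxE ?eqxx ?nk /=.
  by rewrite normr1 expr1n mulr1.
by rewrite normr0 expr0n /= mulr0.
Qed.

Lemma psd_spec n (A : 'M[C]_n) : psdmx A ->
  [/\ spectralmx A \is unitarymx,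
      A = adjmx (spectralmx A) *m diag_mx (spectral_diag A) *m spectralmx A &
      forall j, 0 <= spectral_diag A 0 j].
Proof.
move=> Ap; have H := psd_herm Ap.
have An : A \is normalmx.
  by apply/normalmxP; change (A *m adjmx A = adjmx A *m A); rewrite H.
have /orthomx_spectralP EA := An.
have Pu := spectral_unitarymx A.
rewrite invmx_unitary // in EA.
split => // j.
have := Ap (adjmx (spectralmx A) *m delta_mx j 0).
move: EA Pu; set P := spectralmx A; set d := spectral_diag A => EA Pu.
rewrite -/(qf _ _) [X in qf _ X]EA qf_spec mulmxA (unitary_Kadj Pu) mul1mx.
by rewrite delta_sum.
Qed.

Lemma spec_mul n (P : 'M[C]_n) d e : P \is unitarymx ->
  (adjmx P *m diag_mx d *m P) *m (adjmx P *m diag_mx e *m P) =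
  adjmx P *m diag_mx (\row_j (d 0 j * e 0 j)) *m P.
Proof.
move=> Pu; rewrite -mulmx_diag !mulmxA; congr (_ *m _).
by rewrite -[_ *m P *m adjmx P]mulmxA (unitary_Kadj Pu) mulmx1.
Qed.

Lemma sqrtmx_spec n (V : 'M[C]_n) (e : 'rV[C]_n) : V \is unitarymx ->
  sqrtmx (adjmx V *m diag_mx e *m V) = adjmx V *m diag_mx (map_mx sqrtC e) *m V.
Proof.
move=> Vu; set A := adjmx V *m _ *m V.
have An : A \is normalmx.
  by apply/orthomx_spectral_subproof; exists (V, e) => //=; rewrite invmx_unitary.
have /orthomx_spectralP EA := An.
have Pu := spectral_unitarymx A.
rewrite invmx_unitary // in EA.
rewrite /sqrtmx invmx_unitary //.
move: EA Pu; set P := spectralmx A; set d := spectral_diag A => EA Pu.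
set W := P *m adjmx V.
have DW : diag_mx d *m W = W *m diag_mx e.
  have E1 : P *m A *m adjmx V = diag_mx d *m W.
    by rewrite {1}EA /W !mulmxA (unitary_Kadj Pu) mul1mx.
  have E2 : P *m A *m adjmx V = W *m diag_mx e.
    by rewrite /A /W !mulmxA -[_ *m V *m adjmx V]mulmxA (unitary_Kadj Vu) mulmx1.
  by rewrite -E1 -E2.
have PWV : P = W *m V by rewrite /W -mulmxA (unitary_adjK Vu) mulmx1.
have PW : adjmx P *m W = adjmx V by rewrite /W mulmxA (unitary_adjK Pu) mul1mx.
clearbody W.
have DW' : diag_mx (map_mx sqrtC d) *m W = W *m diag_mx (map_mx sqrtC e).
  apply/matrixP=> i j; move/matrixP: DW => /(_ i j).
  rewrite !mul_diag_mx !mul_mx_diag !mxE.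
  have [->|Wn] := eqVneq (W i j) 0; first by move=> _; rewrite mulr0 mul0r.
  move=> h; have h' : W i j * d 0 i = W i j * e 0 j by rewrite mulrC.
  by rewrite (mulfI Wn h') mulrC.
have -> : adjmx P *m diag_mx (map_mx sqrtC d) *m P =
          adjmx P *m (diag_mx (map_mx sqrtC d) *m W) *m V.
  by rewrite {2}PWV !mulmxA.
by rewrite DW' !mulmxA PW.
Qed.

Lemma sqrtmx_sq n (H : 'M[C]_n) : psdmx H -> sqrtmx (H *m H) = H.
Proof.
case/psd_spec => Pu EH hge; rewrite {1 2}EH spec_mul // sqrtmx_spec //.
rewrite [in RHS]EH; congr (_ *m diag_mx _ *m _); apply/rowP => j; rewrite !mxE.
by rewrite -expr2 sqrCK.
Qed.

End Spec2.

Section Bip.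
Variable C : numClosedFieldType.

Lemma conjM (x y : C) : (x * y)^* = x^* * y^*.
Proof. exact: rmorphM. Qed.

Lemma conjD (x y : C) : (x + y)^* = x^* + y^*.
Proof. exact: rmorphD. Qed.

Definition kmx na nb (al : 'cV[C]_na) : 'M[C]_(nb, na * nb) :=
  \matrix_(k, l) ((al (bidx l).1 0)^* * ((bidx l).2 == k)%:R).

Lemma bidx_index na nb (a : 'I_na) (b : 'I_nb) : bidx (mxvec_index a b) = (a, b).
Proof. by rewrite /bidx /mxvec_index cast_ordK enum_rankK. Qed.

Lemma sum_pair na nb (F : 'I_(na * nb) -> C) :
  \sum_l F l = \sum_a \sum_b F (mxvec_index a b).
Proof.
rewrite pair_big /= (reindex (fun p : 'I_na * 'I_nb => mxvec_index p.1 p.2)) //=.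
exists (@bidx na nb) => [[a b] _|l _] /=; first by rewrite bidx_index.
by case/mxvec_indexP: l => a b; rewrite bidx_index.
Qed.

Lemma sum_delta n (F : 'I_n -> C) i : \sum_k F k * (i == k)%:R = F i.
Proof.
rewrite (bigD1 i) //= eqxx mulr1 big1 ?addr0 // => k /negbTE.
by rewrite eq_sym => ->; rewrite mulr0.
Qed.

Lemma kron_kmx na nb (al : 'cV[C]_na) (B : 'M[C]_nb) :
  kronmx (al *m adjmx al) B = adjmx (kmx nb al) *m B *m kmx nb al.
Proof.
apply/matrixP => l l'; case/mxvec_indexP: l => a b; case/mxvec_indexP: l' => a' b'.
rewrite !mxE !bidx_index /= big_ord1 adjmxE.
under eq_bigr => j _ do rewrite mxE [kmx _ _ _ _]mxE bidx_index /= mulrA.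
rewrite sum_delta.
under eq_bigr => k _ do rewrite adjmxE [kmx _ _ _ _]mxE bidx_index /= conjM conjCK conjC_nat mulrAC.
rewrite sum_delta; ring.
Qed.

Lemma sum_delta2 n (F : 'I_n -> C) i : \sum_k F k * (k == i)%:R = F i.
Proof. by rewrite -(sum_delta F i); apply: eq_bigr => k _; rewrite eq_sym. Qed.

Lemma qfE n (u : 'cV[C]_n) A :
  qf u A = \sum_j \sum_i (u i 0)^* * A i j * u j 0.
Proof.
rewrite /qf mxE; apply: eq_bigr => j _; rewrite mxE big_distrl.
by apply: eq_bigr => i _; rewrite adjmxE.
Qed.

Lemma qf_kmx n m (K : 'M[C]_(n, m)) (v : 'cV[C]_m) B :
  qf v (adjmx K *m B *m K) = qf (K *m v) B.
Proof. by rewrite /qf adjmxM !mulmxA. Qed.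

Lemma qf_lin n I (r : seq I) (c : I -> C) (M : I -> 'M[C]_n) (v : 'cV[C]_n) :
  qf v (\sum_(i <- r) c i *: M i) = \sum_(i <- r) c i * qf v (M i).
Proof.
rewrite /qf mulmx_sumr mulmx_suml summxE; apply: eq_bigr => i _.
by rewrite -scalemxAr -scalemxAl mxE.
Qed.

Lemma sum_dd n (x y : C) (k k' : 'I_n) :
  \sum_b x * (b == k)%:R * (y * (b == k')%:R) = x * y * (k == k')%:R.
Proof.
rewrite (eq_bigr (fun b => (x * (y * (b == k')%:R)) * (b == k)%:R)) => [|b _].
  by rewrite sum_delta2 mulrA.
by rewrite mulrAC.
Qed.

Lemma kmx_mul na nb (al1 al2 : 'cV[C]_na) :
  kmx nb al1 *m adjmx (kmx nb al2) = ((adjmx al1 *m al2) 0 0) *: 1%:M.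
Proof.
apply/matrixP => k k'; rewrite !mxE sum_pair.
under eq_bigr => a _ do under eq_bigr => b _ do
  rewrite adjmxE !mxE bidx_index /= conjM conjCK conjC_nat.
under eq_bigr => a _ do rewrite sum_dd.
rewrite -big_distrl /=; congr (_ * _); apply: eq_bigr => j _; by rewrite adjmxE.
Qed.

Lemma kmxE na nb (al : 'cV[C]_na) k a b :
  kmx nb al k (mxvec_index a b) = (al a 0)^* * (b == k)%:R.
Proof. by rewrite mxE bidx_index. Qed.

Lemma qf_ptrace na nb (al : 'cV[C]_na) (M : 'M[C]_(na * nb)) :
  qf al (ptrace_b M) = \tr (kmx nb al *m M *m adjmx (kmx nb al)).
Proof.
rewrite qfE /mxtrace.
have -> : \sum_k (kmx nb al *m M *m adjmx (kmx nb al)) k k =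
   \sum_k \sum_j \sum_i (al i 0)^* * M (mxvec_index i k) (mxvec_index j k) * al j 0.
  apply: eq_bigr => k _; rewrite mxE sum_pair; apply: eq_bigr => j _.
  under eq_bigr => b _ do rewrite adjmxE kmxE conjM conjCK conjC_nat mxE sum_pair.
  under eq_bigr => b _ do under eq_bigr => a _ do
     (under eq_bigr => b0 _ do rewrite kmxE mulrAC; rewrite sum_delta2).
  under eq_bigr => b _ do rewrite mulrA.
  by rewrite sum_delta2 big_distrl.
under eq_bigr => j _ do under eq_bigr => i _ do
  rewrite mxE big_distrr big_distrl.
rewrite exchange_big /=; under eq_bigr => i _ do rewrite exchange_big.
rewrite exchange_big /=; apply: eq_bigr => k _.
by rewrite exchange_big.
Qed.

End Bip.

Section Scal.
Variable C : numClosedFieldType.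

Lemma amgm (a b c : C) : a \is Num.real -> b \is Num.real -> 0 < c ->
  2%:R * (a * b) <= a ^+ 2 * c + b ^+ 2 / c.
Proof.
move=> ar br c0.
have cn : c != 0 by rewrite gt_eqF.
have : 0 <= c * (a - b / c) ^+ 2.
  apply: mulr_ge0; first exact: ltW.
  apply: real_exprn_even_ge0 => //; apply: realB => //; apply: realM => //.
  by rewrite realV; apply: gtr0_real.
move=> H; rewrite -subr_ge0 (_ : a ^+ 2 * c + b ^+ 2 / c - 2%:R * (a * b) = c * (a - b / c) ^+ 2) //.
by field.
Qed.

Lemma jensen n (w lam : 'I_n -> C) : (forall j, 0 <= w j) -> \sum_j w j = 1 ->
  (forall j, lam j \is Num.real) ->
  (\sum_j w j * lam j) ^+ 2 <= \sum_j w j * lam j ^+ 2.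
Proof.
move=> w0 w1 lr; set m := \sum_j w j * lam j.
have mr : m \is Num.real.
  by apply: rpred_sum => j _; apply: realM => //; apply: ger0_real.
have : 0 <= \sum_j w j * (lam j - m) ^+ 2.
  apply: sumr_ge0 => j _; apply: mulr_ge0 => //.
  by apply: real_exprn_even_ge0 => //; apply: realB.
have key : forall x, \sum_j w j * (lam j - x) ^+ 2 =
   \sum_j w j * lam j ^+ 2 - 2%:R * x * (\sum_j w j * lam j) + x ^+ 2 * \sum_j w j.
  move=> x; rewrite !big_distrr /= -sumrB -big_split /=; apply: eq_bigr => j _; ring.
rewrite key -/m.
rewrite w1 mulr1 => H; rewrite -subr_ge0.
by rewrite (_ : _ - _ = \sum_j w j * lam j ^+ 2 - 2%:R * m * m + m ^+ 2) //; ring.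
Qed.

End Scal.

Section States.
Variable C : numClosedFieldType.

Lemma colM m n p (A : 'M[C]_(m, n)) (B : 'M[C]_(n, p)) i :
  col i (A *m B) = A *m col i B.
Proof. by rewrite !colE mulmxA. Qed.

Lemma tr_spec n (P : 'M[C]_n) d : P \is unitarymx ->
  \tr (adjmx P *m diag_mx d *m P) = \sum_j d 0 j.
Proof.
by move=> Pu; rewrite mxtrace_mulC mulmxA (unitary_Kadj Pu) mul1mx mxtrace_diag.
Qed.

Lemma one_spec n (P : 'M[C]_n) : P \is unitarymx ->
  1%:M = adjmx P *m diag_mx (const_mx 1) *m P.
Proof. by move=> Pu; rewrite diag_const_mx mulmx1 (unitary_adjK Pu). Qed.

Lemma qf_spec_le n (P : 'M[C]_n) (h : 'rV[C]_n) u : P \is unitarymx ->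
  (forall j, 0 <= h 0 j) -> (forall j, h 0 j <= 1) ->
  0 <= qf u (adjmx P *m diag_mx h *m P) /\ qf u (adjmx P *m diag_mx h *m P) <= qf u 1%:M.
Proof.
move=> Pu h0 h1; rewrite (one_spec Pu) !qf_spec; split.
  by apply: sumr_ge0 => j _; apply: mulr_ge0 => //; apply: exprn_ge0.
apply: ler_sum => j _; rewrite [const_mx _ _ _]mxE mul1r; apply: ler_piMl => //; exact: exprn_ge0.
Qed.

Lemma spec_psd n (P : 'M[C]_n) (h : 'rV[C]_n) : P \is unitarymx -> (forall j, 0 <= h 0 j) ->
  psdmx (adjmx P *m diag_mx h *m P).
Proof.
move=> Pu h0 u; rewrite -/(qf _ _) qf_spec.
by apply: sumr_ge0 => j _; apply: mulr_ge0 => //; apply: exprn_ge0.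
Qed.

Lemma sqrt_psd n (A : 'M[C]_n) : psdmx A ->
  [/\ psdmx (sqrtmx A), adjmx (sqrtmx A) = sqrtmx A & sqrtmx A *m sqrtmx A = A].
Proof.
case/psd_spec; set P := spectralmx A; set d := spectral_diag A => Pu EA d0.
have SE : sqrtmx A = adjmx P *m diag_mx (map_mx sqrtC d) *m P.
  by rewrite {1}EA sqrtmx_spec.
rewrite SE; split.
- by apply: spec_psd => // j; rewrite mxE sqrtC_ge0.
- rewrite !adjmxM adjmxK adjmx_diag mulmxA; congr (_ *m diag_mx _ *m _).
  by apply/rowP => j; rewrite !mxE geC0_conj // sqrtC_ge0.
- rewrite spec_mul // [in RHS]EA; congr (_ *m diag_mx _ *m _).
  by apply/rowP => j; rewrite !mxE -expr2 sqrtCK.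
Qed.

Lemma state_spec n (A : 'M[C]_n) : is_state A ->
  [/\ spectralmx A \is unitarymx,
      A = adjmx (spectralmx A) *m diag_mx (spectral_diag A) *m spectralmx A,
      forall j, 0 <= spectral_diag A 0 j & forall j, spectral_diag A 0 j <= 1].
Proof.
case=> Ap tr1; case/psd_spec: Ap; set P := spectralmx A; set d := spectral_diag A.
move=> Pu EA d0; split => // j.
have : \sum_k d 0 k = 1 by rewrite -(tr_spec d Pu) -EA.
rewrite (bigD1 j) //= => <-; rewrite lerDl.
by apply: sumr_ge0 => k _.
Qed.

Lemma state_qf n (A : 'M[C]_n) u : is_state A ->
  [/\ 0 <= qf u A, qf u A <= qf u 1%:M, 0 <= qf u (sqrtmx A) & qf u (sqrtmx A) <= qf u 1%:M].
Proof.
case/state_spec; set P := spectralmx A; set d := spectral_diag A => Pu EA d0 d1.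
have SE : sqrtmx A = adjmx P *m diag_mx (map_mx sqrtC d) *m P.
  by rewrite {1}EA sqrtmx_spec.
have [h1 h2] := qf_spec_le u Pu d0 d1.
have [||h3 h4] := qf_spec_le u Pu (h := map_mx sqrtC d).
- by move=> j; rewrite mxE sqrtC_ge0.
- move=> j; rewrite mxE -sqrtC1 ler_sqrtC //; rewrite qualifE /= ?ler01 //.
by rewrite SE {1 2}EA.
Qed.

End States.

Section Pure.
Variable C : numClosedFieldType.

Lemma qf1 n (u : 'cV[C]_n) : qf u 1%:M = \sum_i `|u i 0| ^+ 2.
Proof.
rewrite /qf mulmx1 mxE; apply: eq_bigr => i _.
by rewrite adjmxE normCK mulrC.
Qed.

Lemma qf1_ge0 n (u : 'cV[C]_n) : 0 <= qf u 1%:M.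
Proof. by rewrite qf1; apply: sumr_ge0 => i _; apply: exprn_ge0. Qed.

Lemma qf1_eq0 n (u : 'cV[C]_n) : qf u 1%:M = 0 -> u = 0.
Proof.
rewrite qf1 => H; have H2 := psumr_eq0P (fun i _ => exprn_ge0 2 (normr_ge0 (u i 0))) H.
apply/matrixP => i j; rewrite ord1 mxE; have := H2 i isT.
by move/eqP; rewrite expf_eq0 /= normr_eq0 => /eqP.
Qed.

Lemma qfZ n (u : 'cV[C]_n) a A : qf u (a *: A) = a * qf u A.
Proof. by rewrite /qf -scalemxAr -scalemxAl mxE. Qed.

Lemma qf0 n (A : 'M[C]_n) : qf 0 A = 0.
Proof. by rewrite /qf mulmx0 mxE. Qed.

Lemma adj_outer n (u : 'cV[C]_n) : adjmx u *m u = (qf u 1%:M)%:M.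
Proof. by rewrite /qf mulmx1 {1}[adjmx u *m u]mx11_scalar. Qed.

Lemma outer_mul n (w : 'cV[C]_n) :
  (w *m adjmx w) *m (w *m adjmx w) = qf w 1%:M *: (w *m adjmx w).
Proof.
by rewrite mulmxA -(mulmxA w) adj_outer mul_mx_scalar scalemxAl.
Qed.

Lemma qf_outer n (u w : 'cV[C]_n) : qf u (w *m adjmx w) = qf (adjmx w *m u) 1%:M.
Proof. by rewrite /qf adjmxM adjmxK mulmx1 !mulmxA. Qed.

Lemma tr_outer n (w : 'cV[C]_n) : \tr (w *m adjmx w) = qf w 1%:M.
Proof. by rewrite mxtrace_mulC trace_mx11 /qf mulmx1. Qed.

Lemma sqrt_outer n (w : 'cV[C]_n) :
  sqrtmx (w *m adjmx w) = (sqrtC (qf w 1%:M))^-1 *: (w *m adjmx w).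
Proof.
set c := qf w 1%:M; set H := _ *: _.
have c0 : 0 <= c by apply: qf1_ge0.
have Hp : psdmx H.
  move=> u; rewrite -/(qf u H) qfZ qf_outer.
  by apply: mulr_ge0; [rewrite invr_ge0 sqrtC_ge0 | apply: qf1_ge0].
have HH : H *m H = w *m adjmx w.
  rewrite /H -scalemxAl -scalemxAr outer_mul -/c scalerA.
  have [c00|cn] := eqVneq c 0.
    by move/qf1_eq0: c00 => ->; rewrite mul0mx !scaler0.
  by rewrite scalerA (_ : _ * _ = 1) ?scale1r // -invfM -expr2 sqrtCK mulVf.
by rewrite -HH sqrtmx_sq.
Qed.

Lemma sq_lemma (c : C) : 0 <= c -> ((sqrtC c)^-1 * c) ^+ 2 = c.
Proof.
have [->|cn] := eqVneq c 0; first by rewrite mulr0 expr0n.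
by move=> _; rewrite exprMn exprVn sqrtCK expr2 mulrA mulVf // mul1r.
Qed.

Lemma fid_pure n (v : 'cV[C]_n) s : psdmx s ->
  fidelity (v *m adjmx v) s ^+ 2 = qf v s.
Proof.
case/sqrt_psd => _ Sh SS; rewrite /fidelity.
have -> : sqrtmx s *m (v *m adjmx v) *m sqrtmx s =
          (sqrtmx s *m v) *m adjmx (sqrtmx s *m v) by rewrite adjmxM Sh !mulmxA.
rewrite sqrt_outer linearZ /= tr_outer sq_lemma ?qf1_ge0 //.
by rewrite /qf mulmx1 adjmxM Sh -{3}SS !mulmxA.
Qed.

Lemma aff_pure n (v : 'cV[C]_n) s : adjmx v *m v = 1%:M ->
  affinity (v *m adjmx v) s = qf v (sqrtmx s).
Proof.
move=> hv; rewrite /affinity sqrt_outer.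
have -> : qf v 1%:M = 1 by rewrite /qf mulmx1 hv mxE.
rewrite sqrtC1 invr1 scale1r -mulmxA mxtrace_mulC trace_mx11.
by rewrite /qf mulmxA.
Qed.

End Pure.

Section CQ.
Variable C : numClosedFieldType.

Lemma col_inner na (U : 'M[C]_na) i j :
  (adjmx (col i U) *m col j U) 0 0 = (adjmx U *m U) i j.
Proof. by rewrite !mxE; apply: eq_bigr => k _; rewrite !mxE. Qed.

Lemma kmx_orth na nb (U : 'M[C]_na) i j : onbasis U ->
  kmx nb (col i U) *m adjmx (kmx nb (col j U)) = (i == j)%:R *: 1%:M.
Proof. by move=> hU; rewrite kmx_mul col_inner hU mxE. Qed.

Lemma kmx_XX na nb (U : 'M[C]_na) i j (A B : 'M[C]_nb) : onbasis U ->
  (adjmx (kmx nb (col i U)) *m A *m kmx nb (col i U)) *m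
  (adjmx (kmx nb (col j U)) *m B *m kmx nb (col j U)) =
  (i == j)%:R *: (adjmx (kmx nb (col i U)) *m (A *m B) *m kmx nb (col j U)).
Proof.
move=> hU.
have -> : (adjmx (kmx nb (col i U)) *m A *m kmx nb (col i U)) *m
  (adjmx (kmx nb (col j U)) *m B *m kmx nb (col j U)) =
  adjmx (kmx nb (col i U)) *m A *m (kmx nb (col i U) *m adjmx (kmx nb (col j U)))
   *m B *m kmx nb (col j U) by rewrite !mulmxA.
by rewrite kmx_orth // -scalemxAr mulmx1 -!scalemxAl !mulmxA.
Qed.

Lemma cq_qf na nb (U : 'M[C]_na) (p : 'I_na -> C) (S : 'I_na -> 'M[C]_nb) v :
  qf v (\sum_i p i *: kronmx (col i U *m adjmx (col i U)) (S i)) =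
  \sum_i p i * qf (kmx nb (col i U) *m v) (S i).
Proof.
under eq_bigr do rewrite kron_kmx.
by rewrite qf_lin; apply: eq_bigr => i _; rewrite qf_kmx.
Qed.

Lemma cq_sqrt na nb (U : 'M[C]_na) (p : 'I_na -> C) (S : 'I_na -> 'M[C]_nb) :
  onbasis U -> (forall i, 0 <= p i) -> (forall i, is_state (S i)) ->
  sqrtmx (\sum_i p i *: kronmx (col i U *m adjmx (col i U)) (S i)) =
  \sum_i sqrtC (p i) *: (adjmx (kmx nb (col i U)) *m sqrtmx (S i) *m kmx nb (col i U)).
Proof.
move=> hU p0 Ss; set T := \sum_i sqrtC _ *: _.
have Tp : psdmx T.
  move=> v; rewrite -/(qf v T) qf_lin; apply: sumr_ge0 => i _; rewrite qf_kmx.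
  apply: mulr_ge0; first by rewrite sqrtC_ge0.
  by case: (state_qf (kmx nb (col i U) *m v) (Ss i)).
have TT : T *m T = \sum_i p i *: kronmx (col i U *m adjmx (col i U)) (S i).
  rewrite mulmx_suml; apply: eq_bigr => i _; rewrite mulmx_sumr (bigD1 i) //=.
  rewrite big1 ?addr0 => [|j nj].
    rewrite -scalemxAl -scalemxAr scalerA -expr2 sqrtCK kmx_XX // eqxx scale1r.
    have [_ _ ->] := sqrt_psd (proj1 (Ss i)).
    by rewrite kron_kmx.
  rewrite -scalemxAl -scalemxAr kmx_XX // eq_sym (negbTE nj) scale0r.
  by rewrite !scaler0.
by rewrite -TT sqrtmx_sq.
Qed.

End CQ.

Section Wit.
Variable C : numClosedFieldType.

Definition Sst nb (psi : 'cV[C]_nb) : 'M[C]_nb :=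
  if qf psi 1%:M == 0 then nb%:R^-1 *: 1%:M
  else ((sqrtC (qf psi 1%:M))^-1 *: psi) *m adjmx ((sqrtC (qf psi 1%:M))^-1 *: psi).

Lemma unit_state n (u : 'cV[C]_n) : qf u 1%:M = 1 ->
  is_state (u *m adjmx u) /\ sqrtmx (u *m adjmx u) = u *m adjmx u.
Proof.
move=> h; split; first split.
- by move=> x; rewrite -/(qf x _) qf_outer qf1_ge0.
- by rewrite tr_outer.
- by rewrite sqrt_outer h sqrtC1 invr1 scale1r.
Qed.

Lemma qfZv n (u : 'cV[C]_n) a A : qf (a *: u) A = a^* * a * qf u A.
Proof. by rewrite /qf adjmxZ -!scalemxAl -scalemxAr scalerA mxE. Qed.

Lemma qf_sc (x : C) : qf (x%:M : 'M_1) 1%:M = `|x| ^+ 2.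
Proof. by rewrite qf1 big_ord1 mxE. Qed.

Lemma Sst_prop nb (psi : 'cV[C]_nb) : (0 < nb)%N ->
  [/\ is_state (Sst psi), qf psi (Sst psi) = qf psi 1%:M &
      qf psi (sqrtmx (Sst psi)) = qf psi 1%:M].
Proof.
move=> nb0; rewrite /Sst; set c := qf psi 1%:M.
have c0 : 0 <= c by apply: qf1_ge0.
case: eqP => [cz|/eqP cn].
  have psi0 := qf1_eq0 cz.
  split; last by rewrite cz psi0 !qf0.
  - split.
      move=> x; rewrite -/(qf x _) qfZ; apply: mulr_ge0; last exact: qf1_ge0.
      by rewrite invr_ge0 ler0n.
    by rewrite linearZ /= mxtrace1 mulVf // pnatr_eq0 -lt0n.
  - by rewrite cz psi0 !qf0.
set a := (sqrtC c)^-1; set u := a *: psi.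
have a0 : 0 <= a by rewrite invr_ge0 sqrtC_ge0.
have hu : qf u 1%:M = 1.
  rewrite /u qfZv geC0_conj // /a -invfM -expr2 sqrtCK mulVf //.
have [st sq] := unit_state hu.
suff key : qf psi (u *m adjmx u) = c by split; rewrite ?sq.
rewrite qf_outer /u adjmxZ -scalemxAl adj_outer -/c geC0_conj //.
rewrite (_ : a *: c%:M = (a * c)%:M); last first.
  by apply/matrixP => i j; rewrite !mxE mulrnAr.
rewrite qf_sc ger0_norm ?mulr_ge0 //.
by rewrite /a sq_lemma.
Qed.

Lemma ptrace_outer na nb (al : 'cV[C]_na) (v : 'cV[C]_(na * nb)) :
  qf al (ptrace_b (v *m adjmx v)) = qf (kmx nb al *m v) 1%:M.
Proof.
rewrite qf_ptrace -tr_outer; congr (\tr _).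
by rewrite adjmxM !mulmxA.
Qed.

Lemma ptrace_tr na nb (M : 'M[C]_(na * nb)) : \tr (ptrace_b M) = \tr M.
Proof. by rewrite /mxtrace sum_pair; apply: eq_bigr => a _; rewrite mxE. Qed.

Lemma unit_sums n (W : 'M[C]_n) : W \is unitarymx ->
  (forall j, \sum_i `|W j i| ^+ 2 = 1) /\ (forall i, \sum_j `|W j i| ^+ 2 = 1).
Proof.
move=> Wu; split => [j|i].
  have /matrixP /(_ j j) := unitary_Kadj Wu; rewrite !mxE eqxx mulr1n => <-.
  by apply: eq_bigr => i _; rewrite !mxE normCK.
have /matrixP /(_ i i) := unitary_adjK Wu; rewrite !mxE eqxx mulr1n => <-.
by apply: eq_bigr => j _; rewrite !mxE normCK mulrC.
Qed.

Lemma qmax n (lam w : 'I_n -> C) lk : (forall j, 0 <= w j) -> \sum_j w j = 1 ->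
  (forall j, lam j <= lk) -> \sum_j lam j * w j <= lk.
Proof.
move=> w0 w1 hl; apply: le_trans (_ : \sum_j lk * w j <= lk).
  by apply: ler_sum => j _; apply: ler_wpM2r.
by rewrite -big_distrr /= w1 mulr1.
Qed.

Lemma qsq n (lam : 'I_n -> C) (w : 'I_n -> 'I_n -> C) :
  (forall j i, 0 <= w j i) -> (forall i, \sum_j w j i = 1) ->
  (forall j, \sum_i w j i = 1) -> (forall j, lam j \is Num.real) ->
  \sum_i (\sum_j w j i * lam j) ^+ 2 <= \sum_j lam j ^+ 2.
Proof.
move=> w0 wc wr lr.
apply: le_trans (_ : \sum_i \sum_j w j i * lam j ^+ 2 <= _).
  by apply: ler_sum => i _; apply: jensen.
rewrite exchange_big /=; apply: ler_sum => j _.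
by rewrite -big_distrl /= wr mul1r.
Qed.

Lemma exists_max n (f : 'I_n -> C) : (0 < n)%N -> (forall j, f j \is Num.real) ->
  exists k, forall j, f j <= f k.
Proof.
case: n f => [|n] f //= _; elim: n f => [|n IH] f fr.
  by exists ord0 => j; rewrite ord1.
have [k' hk] := IH (fun j => f (lift ord0 j)) (fun j => fr _).
have [h|h] := boolP (f ord0 <= f (lift ord0 k')).
  exists (lift ord0 k') => j; case: (unliftP ord0 j) => [j'|] ->; first exact: hk.
  exact: h.
have h' : f (lift ord0 k') <= f ord0.
  by move: (real_leVge (fr ord0) (fr (lift ord0 k'))); rewrite (negbTE h).
exists ord0 => j; case: (unliftP ord0 j) => [j'|] ->; last exact: lexx.
exact: le_trans (hk j') h'.
Qed.

End Wit.

Section Main.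
Variable C : numClosedFieldType.

Lemma diag_delta n (d : 'rV[C]_n) i :
  diag_mx d *m (delta_mx i 0 : 'cV[C]_n) = d 0 i *: delta_mx i 0.
Proof.
rewrite mul_diag_mx; apply/matrixP => a b; rewrite !mxE.
by case: eqP => [->|] //=; rewrite !mulr0.
Qed.

Lemma witness na nb (v : 'cV[C]_(na * nb)) (P : 'M[C]_na) (lam : 'rV[C]_na)
    (p : 'I_na -> C) :
  (0 < nb)%N -> P \is unitarymx ->
  ptrace_b (v *m adjmx v) = adjmx P *m diag_mx lam *m P ->
  (forall i, 0 <= p i) -> \sum_i p i = 1 ->
  let U := adjmx P in
  let s := \sum_i p i *: kronmx (col i U *m adjmx (col i U))
                                (Sst (kmx nb (col i U) *m v)) in
  [/\ onbasis U, eigenbasis U (ptrace_b (v *m adjmx v)), is_cq_in U s,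
      qf v s = \sum_i p i * lam 0 i &
      qf v (sqrtmx s) = \sum_i sqrtC (p i) * lam 0 i].
Proof.
move=> nb0 Pu ER p0 p1 U s.
have qi i : qf (kmx nb (col i U) *m v) 1%:M = lam 0 i.
  rewrite -ptrace_outer ER /U colE qf_spec mulmxA (unitary_Kadj Pu) mul1mx.
  by rewrite delta_sum.
have Ss i := Sst_prop (kmx nb (col i U) *m v) nb0.
have hU : onbasis U by rewrite /onbasis /U adjmxK (unitary_Kadj Pu).
split => //.
- move=> i; exists (lam 0 i); rewrite ER /U colE !mulmxA -(mulmxA _ P).
  rewrite (unitary_Kadj Pu) mulmx1 -mulmxA diag_delta.
  by rewrite -scalemxAr.
- exists p, (fun i => Sst (kmx nb (col i U) *m v)).
  by do 2 split => //; split => // i; case: (Ss i).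
- rewrite /s cq_qf; apply: eq_bigr => i _.
  by case: (Ss i) => _ -> _; rewrite qi.
- rewrite /s cq_sqrt //; last by move=> i; case: (Ss i).
  rewrite qf_lin; apply: eq_bigr => i _; rewrite qf_kmx.
  by case: (Ss i) => _ _ ->; rewrite qi.
Qed.

Lemma cq_psd na nb (U : 'M[C]_na) (s : 'M[C]_(na * nb)) : is_cq_in U s -> psdmx s.
Proof.
case=> p [S [p0 [p1 [Ss ->]]]] u; rewrite -/(qf u _) cq_qf.
apply: sumr_ge0 => i _; apply: mulr_ge0 => //.
by case: (state_qf (kmx nb (col i U) *m u) (Ss i)).
Qed.

Lemma pure_main na nb X (v : 'cV[C]_(na * nb)) (U : 'M[C]_na) s :
  is_state (v *m adjmx v) -> onbasis U -> is_cq_in U s ->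
  exists U' s', [/\ onbasis U', eigenbasis U' (ptrace_b (v *m adjmx v)),
     is_cq_in U' s' & dX X (v *m adjmx v) s' <= dX X (v *m adjmx v) s].
Proof.
move=> [rp tr1] hU hs; have sp := cq_psd hs.
move: hs => [p [S [p0 [p1 [Ss Es]]]]].
have hv : adjmx v *m v = 1%:M by rewrite adj_outer -tr_outer tr1.
have nab : (0 < na * nb)%N.
  case: (pickP (fun _ : 'I_(na * nb) => true)) => [k _|H].
    exact: leq_ltn_trans (leq0n k) (ltn_ord k).
  move: tr1; rewrite /mxtrace big1 => [/eqP|k _]; first by rewrite eq_sym oner_eq0.
  by have := H k.
have na0 : (0 < na)%N by move: nab; rewrite muln_gt0 => /andP[].
have nb0 : (0 < nb)%N by move: nab; rewrite muln_gt0 => /andP[].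
have Rp : psdmx (ptrace_b (v *m adjmx v)).
  by move=> al; rewrite -/(qf al _) ptrace_outer qf1_ge0.
have [Pu ER l0] := psd_spec Rp.
move: Pu ER l0; set P := spectralmx _; set lam := spectral_diag _ => Pu ER l0.
have l1 : \sum_j lam 0 j = 1.
  by rewrite -(tr_spec lam Pu) -ER ptrace_tr tr1.
have lr j : lam 0 j \is Num.real by apply: ger0_real.
set W := P *m U.
have Wu : W \is unitarymx.
  apply/unitarymxP; change (W *m adjmx W = 1%:M).
  by rewrite /W adjmxM mulmxA -(mulmxA P) (mulmx1C hU) mulmx1 (unitary_Kadj Pu).
have [rows cols] := unit_sums Wu.
set q := fun i => qf (kmx nb (col i U) *m v) 1%:M.
have qE i : q i = \sum_j `|W j i| ^+ 2 * lam 0 j.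
  rewrite /q -ptrace_outer ER qf_spec; apply: eq_bigr => j _.
  by rewrite -colM -/W mxE mulrC.
have q0 i : 0 <= q i by apply: qf1_ge0.
have Sq i := state_qf (kmx nb (col i U) *m v) (Ss i).
case: X.
- have [k hk] := exists_max na0 lr.
  have hp0 : forall i : 'I_na, 0 <= ((i == k)%:R : C) by move=> i; apply: ler0n.
  have hp1 : \sum_(i < na) ((i == k)%:R : C) = 1.
    by rewrite (bigD1 k) //= eqxx big1 ?addr0 // => i /negbTE ->.
  have [hU' heig hcq hqf _] := witness nb0 Pu ER hp0 hp1.
  eexists; eexists; split; [exact: hU' | exact: heig | exact: hcq | ].
  rewrite /dX /= !fid_pure //; last exact: cq_psd hcq.
  rewrite hqf (_ : \sum_i (i == k)%:R * lam 0 i = lam 0 k); last first.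
    by rewrite -(sum_delta2 (fun i => lam 0 i) k); apply: eq_bigr => i _; rewrite mulrC.
  rewrite lerD2l lerN2 Es cq_qf.
  apply: le_trans (_ : \sum_i p i * q i <= _).
    by apply: ler_sum => i _; case: (Sq i) => _ h _ _; apply: ler_wpM2l.
  under eq_bigr do rewrite mulrC.
  apply: qmax => // i; rewrite qE.
  under eq_bigr do rewrite mulrC.
  by apply: qmax => // j; apply: exprn_ge0.
- set s2 := \sum_j lam 0 j ^+ 2.
  have s20 : 0 < s2.
    rewrite lt_def sumr_ge0 ?andbT => [|j _]; last exact: exprn_ge0.
    apply/eqP => h; have H := psumr_eq0P (fun j _ => exprn_ge0 2 (l0 j)) h.
    move: l1; rewrite big1 => [/eqP|j _]; first by rewrite eq_sym oner_eq0.
    by move/eqP: (H j isT); rewrite expf_eq0 /= => /eqP.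
  set t := sqrtC s2.
  have t0 : 0 < t by rewrite sqrtC_gt0.
  have tn : t != 0 by rewrite gt_eqF.
  have tt : t ^+ 2 = s2 by apply: sqrtCK.
  set p' := fun i => lam 0 i ^+ 2 / s2.
  have hp0 i : 0 <= p' i.
    by apply: divr_ge0; [apply: exprn_ge0 | apply: ltW].
  have hp1 : \sum_i p' i = 1 by rewrite /p' -big_distrl /= mulfV // gt_eqF.
  have [hU' heig hcq _ hsq] := witness nb0 Pu ER hp0 hp1.
  eexists; eexists; split; [exact: hU' | exact: heig | exact: hcq | ].
  rewrite /dX /= !aff_pure // hsq.
  have -> : \sum_i sqrtC (p' i) * lam 0 i = t.
    have sp' i : sqrtC (p' i) = lam 0 i / t.
      rewrite /p' -tt -expr_div_n sqrCK //; apply: divr_ge0 => //; exact: ltW.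
    under eq_bigr do rewrite sp' mulrAC -expr2.
    by rewrite -big_distrl /= -/s2 -tt expr2 mulfK.
  rewrite lerD2l lerN2.
  rewrite Es cq_sqrt // qf_lin.
  under eq_bigr do rewrite qf_kmx.
  set A := \sum_i _.
  have A0 : 0 <= A.
    apply: sumr_ge0 => i _; apply: mulr_ge0; first by rewrite sqrtC_ge0.
    by case: (Sq i).
  have A1 : A <= \sum_i sqrtC (p i) * q i.
    apply: ler_sum => i _; apply: ler_wpM2l; first by rewrite sqrtC_ge0.
    by case: (Sq i).
  have A2 : \sum_i sqrtC (p i) * q i <= t.
    rewrite -(@ler_pM2l _ 2%:R) ?ltr0n //.
    rewrite big_distrr /=.
    apply: le_trans (_ : \sum_i (p i * t + q i ^+ 2 / t) <= _).
      apply: ler_sum => i _; rewrite -{2}(sqrtCK (p i)).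
      apply: amgm => //; apply: ger0_real; [rewrite sqrtC_ge0 // | exact: q0].
    rewrite big_split /= -big_distrl -big_distrl /= p1 mul1r.
    have hq : \sum_i q i ^+ 2 <= s2.
      under eq_bigr do rewrite qE.
      apply: (qsq (w := fun j i => `|W j i| ^+ 2) (lam := fun j => lam 0 j)) => //.
      by move=> j i; apply: exprn_ge0.
    rewrite mulr_natl mulr2n lerD2l.
    apply: le_trans (_ : s2 / t <= t).
      by apply: ler_wpM2r => //; rewrite invr_ge0 ltW.
    by rewrite -tt expr2 mulfK.
  rewrite !expr2; apply: ler_pM => //; exact: le_trans A1 A2.
Qed.

End Main.

Theorem theorem9 (C : numClosedFieldType) (na nb : nat) (X : fid_kind)
    (rho : 'M[C]_(na * nb)) :
  is_state rho ->
  forall cc d : C,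
    is_min (cc_values X rho) cc ->
    is_min (disc_values X rho) d ->
    d <= cc /\
    ((ptrace_b rho = na%:R^-1 *: 1%:M \/ is_pure rho) -> cc = d).
Proof.
move=> st cc d [ccm ccmin] [dm dmin].
have dcc : d <= cc.
  apply: dmin; case: ccm => U [sg [hU [_ [hcq ->]]]].
  by exists U, sg.
split => // H; apply/eqP; rewrite eq_le dcc andbT.
case: dm => U [sg [hU [hcq ->]]].
case: H => [Hmix|[_ [v Ev]]].
  apply: ccmin; exists U, sg; split => //; split => //.
  move=> i; exists (na%:R^-1); by rewrite Hmix -scalemxAl mul1mx.
subst rho.
have [U' [s' [hU' he hcq' hle]]] := pure_main X st hU hcq.
apply: le_trans hle; apply: ccmin.
by exists U', s'.
Qed.
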